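(* Let $K\subset\mathbb{R}$ be a compact set with $\mathrm{conv}(K)=[a,b]$, and suppose there exists $\varepsilon>0$ such that $[a,a+\varepsilon]\cup[b-\varepsilon,b]\subset K$. Then there exists an index $\ell\in\mathbb{N}$, depending only on $\varepsilon$ and $b-a$, such that \[\frac{1}{2^\ell}\sum_{j=1}^{2^\ell}K=\frac{1}{2^{\ell+k}}\sum_{j=1}^{2^{\ell+k}}K\quad\text{for every }k\in\mathbb{N}.\] Moreover, $\ell$ increases with $b-a$ and decreases as $\varepsilon$ increases.
   Context: $\sum_{j=1}^N K$ denotes the Minkowski sum $K+\cdots+K$ ($N$ copies), where $X+Y=\{x+y:x\in X,y\in Y\}$, and $tX=\{tx:x\in X\}$. $\mathrm{conv}$ denotes convex hull. *)

(* Defs.v *)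
From HB Require Import structures.
From mathcomp Require Import all_boot all_order all_algebra.
From mathcomp Require Import all_classical all_reals all_analysis.
Set Implicit Arguments. Unset Strict Implicit. Unset Printing Implicit Defensive.
Import Order.TTheory GRing.Theory Num.Theory.
Local Open Scope classical_set_scope.
Local Open Scope ring_scope.

Definition msum (R : realType) (X Y : set R) : set R :=
  [set z | exists x, exists y, X x /\ Y y /\ z = x + y].

(* N-fold Minkowski sum K + ... + K (N copies); nsum K 0 = {0}
   (only N >= 1 is used in the statement). *)
Fixpoint nsum (R : realType) (K : set R) (n : nat) : set R :=
  match n with
  | O => [set 0]
  | S m => msum (nsum K m) K
  end.

Definition dil (R : realType) (t : R) (X : set R) : set R :=
  [set z | exists x, X x /\ z = t * x].

Definition convhull (R : realType) (K : set R) : set R :=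
  [set z | exists (n : nat) (w p : 'I_n -> R),
     (forall i, 0 <= w i) /\ \sum_(i < n) w i = 1 /\
     (forall i, K (p i)) /\ z = \sum_(i < n) w i * p i].

(* Main.v *)
Require Import Defs.
From HB Require Import structures.
From mathcomp Require Import all_boot all_order all_algebra.
From mathcomp Require Import all_classical all_reals all_analysis.
From mathcomp Require Import ring lra.
Import Order.TTheory GRing.Theory Num.Theory numFieldTopology.Exports numFieldNormedType.Exports.
Local Open Scope classical_set_scope.
Local Open Scope ring_scope.

Section Aux.
Variable R : realType.

Lemma nsum_mono (A B : set R) n : A `<=` B -> nsum A n `<=` nsum B n.
Proof.
move=> AB; elim: n => [|n IH] //= z [x [y [Hx [Hy ->]]]].
by exists x, y; split; [apply: IH|split; [apply: AB|]].
Qed.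

Lemma nsum_add (K : set R) i j x y :
  nsum K i x -> nsum K j y -> nsum K (i + j) (x + y).
Proof.
move=> Hx; elim: j y => [|j IH] y /=.
  by move=> ->; rewrite addr0 addn0.
move=> [y' [k [Hy' [Hk ->]]]]; rewrite addnS /=.
exists (x + y'), k; split; [exact: IH|split => //]. by rewrite addrA.
Qed.

Lemma nsum_itv (al be : R) n x :
  n%:R * al <= x <= n%:R * be -> nsum `[al, be]%classic n x.
Proof.
elim: n x => [|n IH] x /=.
  by rewrite !mul0r => /andP[h1 h2]; apply/eqP; rewrite eq_le h1 h2.
move=> /andP[h1 h2].
have hn : 0 < n.+1%:R :> R by rewrite ltr0n.
have hn0 : 0 <= n%:R :> R by [].
have e : n.+1%:R = n%:R + 1 :> R by rewrite -natr1.
rewrite e in h1 h2 hn *.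
exists (x * n%:R / (n%:R + 1)), (x / (n%:R + 1)); split; [|split].
- apply: IH; apply/andP; split.
  + rewrite ler_pdivlMr //; nra.
  + rewrite ler_pdivrMr //; nra.
- rewrite /= in_itv /=; apply/andP; split.
  + by rewrite ler_pdivlMr // mulrC.
  + by rewrite ler_pdivrMr // mulrC.
- field; lra.
Qed.

Lemma split_itv (lo1 hi1 lo2 hi2 x : R) : lo1 <= hi1 -> lo2 <= hi2 ->
  lo1 + lo2 <= x <= hi1 + hi2 ->
  exists u v, lo1 <= u <= hi1 /\ lo2 <= v <= hi2 /\ x = u + v.
Proof.
move=> h1 h2 /andP[h3 h4].
have [hc|hc] := leP (x - lo2) hi1.
  exists (x - lo2), lo2; split; [apply/andP; split; lra|split; [apply/andP; split; lra|]].
  by rewrite subrK.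
exists hi1, (x - hi1); split; [apply/andP; split; lra|split; [apply/andP; split; lra|]].
by rewrite addrC subrK.
Qed.

Lemma choose_j (d e t : R) N : 0 < e -> 0 <= d -> d <= N%:R * e ->
  0 <= t <= N%:R * d -> exists j, (j <= N)%N /\
  j%:R * (d - e) <= t <= j%:R * d + (N%:R - j%:R) * e.
Proof.
move=> he hd hN /andP[t0 t1].
have hn0 : 0 <= N%:R :> R by [].
have [hde|hde] := leP d e.
  exists 0%N; split => //; rewrite !mul0r add0r subr0; apply/andP; split => //.
  nra.
have hp : 0 < d - e by lra.
set m := Num.truncn (t / (d - e)).
have /andP[m1 m2] : m%:R <= t / (d - e) < m.+1%:R.
  by apply: truncn_itv; rewrite divr_ge0 // ltW.
rewrite ler_pdivlMr // in m1; rewrite ltr_pdivrMr // in m2.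
have [hm|hm] := leqP m N.
  exists m; split => //; apply/andP; split => //.
  rewrite -natr1 in m2; nra.
exists N; split => //; apply/andP; split; last by rewrite subrr mul0r addr0.
have : N.+1%:R <= m%:R :> R by rewrite ler_nat.
rewrite -natr1; nra.
Qed.

Lemma key (K : set R) a b e N : 0 < e -> a <= b ->
  K `<=` `[a, b]%classic -> `[a, a + e]%classic `|` `[b - e, b]%classic `<=` K ->
  b - a <= N%:R * e ->
  nsum K N = [set x | N%:R * a <= x <= N%:R * b].
Proof.
move=> he hab Kab K0 hN; apply/seteqP; split.
  elim: (N) => [|n IH] x /=; first by move=> ->; rewrite !mul0r lexx.
  move=> [y [k [Hy [Hk ->]]]].
  have /andP[y1 y2] := IH _ Hy.
  have := Kab _ Hk; rewrite /= in_itv /= => /andP[k1 k2].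
  rewrite -natr1 !mulrDl !mul1r; apply/andP; split; lra.
move=> x /= /andP[x1 x2].
have hn0 : 0 <= N%:R :> R by [].
have [j [jN /andP[j1 j2]]] := choose_j (b - a) e (x - N%:R * a) N he (ltac:(by rewrite subr_ge0)) hN
   (ltac:(apply/andP; split; nra)).
have hNj : (N - j)%:R = N%:R - j%:R :> R by rewrite natrB.
have hj0 : 0 <= j%:R :> R by [].
have hj1 : 0 <= (N - j)%:R :> R by [].
have [u [v [/andP[u1 u2] [/andP[v1 v2] ->]]]] :=
  split_itv (j%:R * (b - e)) (j%:R * b)
            ((N - j)%:R * a) ((N - j)%:R * (a + e)) x
    (ltac:(nra)) (ltac:(nra)) (ltac:(apply/andP; split; rewrite hNj; nra)).
rewrite -(subnKC jN).
apply: nsum_add.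
  apply: (@nsum_mono `[b - e, b]%classic K); first by move=> y Hy; apply: K0; right.
  by apply: nsum_itv; apply/andP; split.
apply: (@nsum_mono `[a, a + e]%classic K); first by move=> y Hy; apply: K0; left.
by apply: nsum_itv; apply/andP; split.
Qed.

Lemma dil_key (K : set R) a b N : (0 < N)%N ->
  nsum K N = [set x | N%:R * a <= x <= N%:R * b] ->
  dil (N%:R)^-1 (nsum K N) = `[a, b]%classic.
Proof.
move=> N0 ->; have hN : 0 < N%:R :> R by rewrite ltr0n.
apply/seteqP; split.
  move=> z [x [/andP[x1 x2] ->]]; rewrite /= in_itv /=; apply/andP; split.
    by rewrite mulrC ler_pdivlMr // mulrC.
  by rewrite mulrC ler_pdivrMr // mulrC.
move=> z; rewrite /= in_itv /= => /andP[z1 z2].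
exists (N%:R * z); split; last by rewrite mulKf // lt0r_neq0.
by apply/andP; split; rewrite ler_pM2l.
Qed.
End Aux.

Theorem lemma14 (R : realType) :
  exists L : R -> R -> nat,
    (* L depends only on eps and b - a; nondecreasing in b - a *)
    (forall (e d d' : R), 0 < e -> 0 < d -> d <= d' -> (L e d <= L e d')%N) /\
    (* nonincreasing in eps *)
    (forall (e e' d : R), 0 < e -> e <= e' -> 0 < d -> (L e' d <= L e d)%N) /\
    (forall (K : set R) (a b e : R),
       compact K ->
       convhull K = `[a, b]%classic ->
       0 < e ->
       `[a, a + e]%classic `|` `[b - e, b]%classic `<=` K ->
       forall k : nat,
         dil (2 ^+ L e (b - a))^-1 (nsum K (2 ^ L e (b - a))) =
         dil (2 ^+ (L e (b - a) + k))^-1 (nsum K (2 ^ (L e (b - a) + k)))).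
Proof.
exists (fun e d => (Num.truncn (d / e)).+1); split; [|split].
- move=> e d d' he hd hdd; rewrite ltnS; apply: le_truncn.
  by rewrite ler_pM2r // invr_gt0.
- move=> e e' d he hee hd; rewrite ltnS; apply: le_truncn.
  rewrite ler_pdivrMr ?(lt_le_trans he) // mulrAC ler_pdivlMr //; nra.
move=> K a b e _ hconv he K0 k.
set l := (Num.truncn ((b - a) / e)).+1.
have Kab : K `<=` `[a, b]%classic.
  move=> x Kx; rewrite -hconv.
  exists 1%N, (fun _ => 1), (fun _ => x); split => //; split; first by rewrite big_ord1.
  by split => //; rewrite big_ord1 mul1r.
have hab : a <= b.
  have : `[a, b]%classic a by apply: Kab; apply: K0; left; rewrite /= in_itv /= lexx; lra.
  by rewrite /= in_itv /= => /andP[].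
have bnd : forall m, (l <= m)%N -> b - a <= (2 ^ m)%:R * e.
  move=> m hm.
  have h1 : (b - a) / e < l%:R by apply: truncnS_gt.
  have h2 : l%:R <= (2 ^ m)%:R :> R.
    by rewrite ler_nat; apply: (leq_trans hm); apply: ltnW; apply: ltn_expl.
  rewrite ltr_pdivrMr // in h1; nra.
have main : forall m, (l <= m)%N ->
    dil (2 ^+ m)^-1 (nsum K (2 ^ m)) = `[a, b]%classic.
  move=> m hm; rewrite -natrX; apply: dil_key; first by rewrite expn_gt0.
  exact: key he hab Kab K0 (bnd m hm).
by rewrite !main // leq_addr.
Qed.
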